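(* Let $d\ge2$ be an integer, $a\in\mathbb C$, and $p(t)=a\Bigl((d-1)-\sum_{i=1}^d2t^i\Bigr)$. Suppose $a(d+1)$ is a root of unity and let $k$ be the smallest positive integer with $(a(d+1))^k=1$. Then $V_p$ has order $\operatorname{lcm}(k,d+1)$ if $d$ is odd, and $\operatorname{lcm}(k,2(d+1))$ if $d$ is even.
   Context: For $p(t)=a_0+a_1t+\cdots+a_dt^d$, $V_p$ is the $(d+1)\times(d+1)$ matrix whose $(i,j)$ entry ($0\le i,j\le d$) is $a_{(i-j-1)\bmod (d+1)}$. The order of an invertible matrix $M$ is the smallest $m\ge1$ with $M^m=I$. *)

(* Defs.v *)
From mathcomp Require Import all_boot all_order all_algebra.
From mathcomp Require Import complex.
Set Implicit Arguments. Unset Strict Implicit. Unset Printing Implicit Defensive.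
Import GRing.Theory Num.Theory.
Local Open Scope ring_scope.

(* V_p for p = a_0 + a_1 t + ... + a_d t^d : the (d+1)x(d+1) matrix whose
   (i,j) entry (0 <= i,j <= d) is a_{(i-j-1) mod (d+1)}.
   Since 0 <= i,j <= d, (i - j - 1) mod (d+1) = (i + d - j) %% (d+1) in nat. *)
Definition Vmat (R : nzRingType) (d : nat) (p : {poly R}) : 'M[R]_(d.+1) :=
  \matrix_(i < d.+1, j < d.+1) p`_((i + d - j) %% d.+1)%N.

Definition mx_order (R : nzRingType) (n : nat) (M : 'M[R]_(n.+1)) (m : nat) : Prop :=
  (0 < m)%N /\ M ^+ m = 1 /\ forall m', (0 < m')%N -> M ^+ m' = 1 -> (m <= m')%N.

Definition pcor (R : nzRingType) (d : nat) (a : R) : {poly R} :=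
  a *: ((d.-1)%:R%:P - \sum_(1 <= i < d.+1) 2%:R *: 'X^i).

(* Main.v *)
From mathcomp Require Import all_boot all_order all_algebra zify.
From mathcomp Require Import complex.
Require Import Defs.
From mathcomp Require Import ring.
Import GRing.Theory Num.Theory.
Local Open Scope ring_scope.

Lemma mod2 (n x : nat) : (x < n + n)%N -> (x %% n = if x < n then x else x - n)%N.
Proof. move=> h2; case: ltnP => h1; first by rewrite modn_small.
by rewrite -{1}(subnK h1) modnDr modn_small // ltn_subLR. Qed.

Definition Sp (C : nzRingType) d m : 'M[C]_(d.+1) :=
  \matrix_(i, j) ((i : nat) == (j + m) %% d.+1)%N%:R.
Definition Jm (C : nzRingType) d : 'M[C]_(d.+1) := const_mx 1.

Lemma sum_delta (C : nzRingType) n (f : 'I_n -> C) k0 :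
  \sum_k ((k == k0)%:R * f k) = f k0.
Proof.
rewrite (bigD1 k0) //= eqxx mul1r big1 ?addr0 // => k /negbTE ->; by rewrite mul0r.
Qed.

Lemma sum_delta_r (C : nzRingType) n (f : 'I_n -> C) k0 :
  \sum_k (f k * (k == k0)%:R) = f k0.
Proof.
rewrite (bigD1 k0) //= eqxx mulr1 big1 ?addr0 // => k /negbTE ->; by rewrite mulr0.
Qed.

Lemma Sp_pow (C : nzRingType) d m : (Sp C d 1) ^+ m = Sp C d m.
Proof.
elim: m => [|m IH].
  apply/matrixP => i j; rewrite !mxE addn0 modn_small //.
rewrite exprSr IH; apply/matrixP => i j; rewrite !mxE.
pose k0 : 'I_d.+1 := inord ((j + 1) %% d.+1).
have hk0 : (k0 : nat) = ((j + 1) %% d.+1)%N by rewrite inordK // ltn_pmod.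
have hk : forall k : 'I_d.+1, ((k : nat) == (j + 1) %% d.+1)%N = (k == k0).
  by move=> k; rewrite -hk0.
under eq_bigr => k _ do rewrite !mxE hk.
rewrite sum_delta_r hk0 modnDml -addnA add1n.
done. Qed.

Lemma SJ (C : nzRingType) d : Sp C d 1 * Jm C d = Jm C d.
Proof.
apply/matrixP => i j; rewrite !mxE.
pose k0 : 'I_d.+1 := inord ((i + d) %% d.+1).
have hk0 : (k0 : nat) = ((i + d) %% d.+1)%N by rewrite inordK // ltn_pmod.
have hk : forall k : 'I_d.+1, ((i : nat) == (k + 1) %% d.+1)%N = (k == k0).
  move=> k; rewrite -(inj_eq (@ord_inj _)) hk0.
  have := ltn_ord i; have := ltn_ord k; move: (i : nat) (k : nat) => x y hy hx.
  rewrite !mod2; try lia. do 2 case: ltnP => ?. all: apply/eqP/eqP. all: try lia.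
under eq_bigr => k _ do rewrite !mxE hk mulr1.
by rewrite (bigD1 k0) //= eqxx big1 ?addr0 // => k /negbTE ->.
Qed.

Lemma JS (C : nzRingType) d : Jm C d * Sp C d 1 = Jm C d.
Proof.
apply/matrixP => i j; rewrite !mxE.
pose k0 : 'I_d.+1 := inord ((j + 1) %% d.+1).
have hk0 : (k0 : nat) = ((j + 1) %% d.+1)%N by rewrite inordK // ltn_pmod.
have hk : forall k : 'I_d.+1, ((k : nat) == (j + 1) %% d.+1)%N = (k == k0).
  by move=> k; rewrite -hk0.
under eq_bigr => k _ do rewrite !mxE hk mul1r.
by rewrite (bigD1 k0) //= eqxx big1 ?addr0 // => k /negbTE ->.
Qed.

Lemma JJ (C : nzRingType) d : Jm C d * Jm C d = (d.+1)%:R *: Jm C d.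
Proof.
apply/matrixP => i j; rewrite !mxE.
under eq_bigr => k _ do rewrite !mxE mul1r.
by rewrite sumr_const card_ord mulr1.
Qed.

Lemma SmJ (C : nzRingType) d m : Sp C d 1 ^+ m * Jm C d = Jm C d.
Proof.
elim: m => [|m IH]; first by rewrite expr0 mul1r.
by rewrite exprSr -mulrA SJ.
Qed.

Lemma coef_pcor (C : comNzRingType) d (a : C) t : (t < d.+1)%N ->
  (Defs.pcor d a)`_t = if t == 0%N then a * (d.-1)%:R else - (2%:R * a).
Proof.
move=> ht; rewrite /Defs.pcor coefZ coefB coefC coef_sum.
have -> : \sum_(1 <= l < d.+1) (2%:R *: 'X^l : {poly C})`_t =
          \sum_(1 <= l < d.+1 | l == t) (2%:R : C).
  rewrite [RHS]big_mkcond; apply: eq_bigr => l _.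
  by rewrite coefZ coefXn eq_sym; case: eqP => _; rewrite ?mulr1 ?mulr0.
rewrite big_nat1_eq; case: t ht => [|t] ht /=.
  by rewrite subr0.
by rewrite ht sub0r mulrN mulrC.
Qed.

Lemma modkey d (i j : 'I_d.+1) : ((i + d - j) %% d.+1 == 0)%N = ((i : nat) == (j + 1) %% d.+1)%N.
Proof.
have := ltn_ord i; have := ltn_ord j; move: (i : nat) (j : nat) => x y hy hx.
rewrite !mod2; try lia. do 2 case: ltnP => ?. all: apply/eqP/eqP. all: try lia.
Qed.

Lemma Vmat_eq (C : comNzRingType) d (a : C) : (1 <= d)%N ->
  Defs.Vmat d (Defs.pcor d a) = (a * (d.+1)%:R) *: Sp C d 1 - (2%:R * a) *: Jm C d.
Proof.
case: d => [//|d] _.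
apply/matrixP => i j; rewrite !mxE coef_pcor ?ltn_pmod // modkey.
case: eqP => _ /=; last by rewrite mulr0 mulr1 sub0r.
rewrite mulr1 mulr1 /=.
rewrite -[(d.+2)%:R]natr1 -[(d.+1)%:R]natr1. ring.
Qed.

Lemma Vpow (C : numFieldType) d (a : C) m :
  ((a * (d.+1)%:R) *: Sp C d 1 - (2%:R * a) *: Jm C d) ^+ m =
  (a * (d.+1)%:R) ^+ m *: Sp C d m +
  (((-1) ^+ m - 1) * (a * (d.+1)%:R) ^+ m / (d.+1)%:R) *: Jm C d.
Proof.
have hn : (d.+1)%:R != 0 :> C by rewrite pnatr_eq0.
elim: m => [|m IH].
  by rewrite -(Sp_pow C d 0) !expr0 subrr !mul0r scale0r addr0 scale1r.
rewrite exprSr IH -(Sp_pow C d m) -(Sp_pow C d m.+1).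
rewrite mulrDl !mulrBr -!scalerAl -!scalerAr -exprSr SmJ JS JJ !scalerA.
apply/matrixP => i j; rewrite !mxE.
set s := (Sp C d 1 ^+ m.+1) i j.
rewrite !exprS. field. by rewrite addrC natr1.
Qed.

Lemma one_mxE (C : nzRingType) d (i j : 'I_d.+1) : (1 : 'M[C]_(d.+1)) i j = (i == j)%:R.
Proof. by rewrite !mxE. Qed.

Lemma Vchar (C : numFieldType) d (b : C) m : (2 <= d)%N -> b != 0 ->
  (b ^+ m *: Sp C d m + (((-1) ^+ m - 1) * b ^+ m / (d.+1)%:R) *: Jm C d = 1) <->
  [/\ ~~ odd m, (d.+1 %| m)%N & b ^+ m = 1].
Proof.
move=> hd hb; have hn : (d.+1)%:R != 0 :> C by rewrite pnatr_eq0.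
rewrite -signr_odd; split.
  case: (boolP (odd m)) => hm H.
    have [i hi] : exists i : 'I_d.+1, (i : nat) = (if (m %% d.+1 == 1)%N then 2 else 1)%N.
      by exists (inord (if (m %% d.+1 == 1)%N then 2 else 1)); rewrite inordK //; case: ifP => _; lia.
    move/matrixP: H => /(_ i ord0).
    rewrite !mxE /= add0n.
    have -> : ((i : nat) == m %% d.+1)%N = false.
      move: hi; case: ifP => /eqP h1 h2; apply/negbTE/eqP; lia.
    have -> : (i == ord0) = false.
      apply/negbTE/eqP => /(congr1 val) /=; move: hi; case: ifP => _ ->; done.
    rewrite mulr0 add0r mulr1 expr1 => /eqP.
    rewrite !mulf_eq0 invr_eq0 (negbTE hn) expf_eq0 (negbTE hb) andbF orbF orbF.
    have -> : (-1 - 1 : C) = - 2%:R by rewrite -opprD.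
    by rewrite oppr_eq0 pnatr_eq0.
  rewrite expr0 subrr !mul0r scale0r addr0 in H.
  move/matrixP: H => /(_ ord0 ord0).
  rewrite !mxE /= add0n ?eqxx.
  case: eqP => [h|]; last by move=> _; rewrite mulr0 => /eqP; rewrite eq_sym oner_eq0.
  rewrite mulr1 => ->; split => //.
  by rewrite /dvdn -h.
case=> /negbTE -> hdvd hbm.
rewrite expr0 subrr !mul0r scale0r addr0 hbm scale1r.
apply/matrixP => i j; rewrite !mxE.
rewrite -modnDmr (eqP hdvd) addn0 modn_small //.
Qed.

Local Open Scope complex_scope.

Theorem corollary17 (R : rcfType) (d : nat) (a : R[i]) (k : nat) :
  (2 <= d)%N ->
  k.-primitive_root (a * (d.+1)%:R) ->
  mx_order (Vmat d (pcor d a))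
    (if odd d then lcmn k d.+1 else lcmn k (2 * d.+1)).
Proof.
move=> hd hk.
have k0 : (0 < k)%N := prim_order_gt0 hk.
have hb : a * (d.+1)%:R != 0.
  apply/eqP => h0; move: (prim_expr_order hk); rewrite h0 expr0n eqn0Ngt k0 /=.
  by move/eqP; rewrite eq_sym oner_eq0.
have key : forall m, Vmat d (pcor d a) ^+ m = 1 <->
    [/\ ~~ odd m, (d.+1 %| m)%N & (k %| m)%N].
  move=> m; rewrite Vmat_eq ?(ltnW hd) // Vpow.
  split => [/(Vchar _ _ _ _ hd hb) [h1 h2 h3]|[h1 h2 h3]].
    by split => //; rewrite (prim_order_dvd hk) h3.
  by apply/(Vchar _ _ _ _ hd hb); split => //; apply/eqP; rewrite -(prim_order_dvd hk).
have hmin : forall L, (0 < L)%N -> (forall m, (0 < m)%N -> ~~ odd m -> (d.+1 %| m)%N ->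
     (k %| m)%N -> (L %| m)%N) -> ~~ odd L -> (d.+1 %| L)%N -> (k %| L)%N ->
     mx_order (Vmat d (pcor d a)) L.
  move=> L L0 HL h1 h2 h3; split => //; split; first by apply/key.
  move=> m' m0 /key [g1 g2 g3]; apply: dvdn_leq => //; exact: HL.
case: ifP => hodd; apply: hmin.
- by rewrite lcmn_gt0 k0.
- by move=> m _ _ h2 h3; rewrite dvdn_lcm h2 h3.
- rewrite -dvdn2; apply: dvdn_trans (dvdn_lcmr _ _); by rewrite dvdn2 /= hodd.
- exact: dvdn_lcmr.
- exact: dvdn_lcml.
- by rewrite lcmn_gt0 k0.
- move=> m _ h1 h2 h3; rewrite dvdn_lcm h3 Gauss_dvd ?coprime2n /= ?hodd //.
  by rewrite dvdn2 h1 h2.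
- rewrite -dvdn2; apply: dvdn_trans (dvdn_lcmr _ _); exact: dvdn_mulr.
- apply: dvdn_trans (dvdn_lcmr _ _); exact: dvdn_mull.
- exact: dvdn_lcml.
Qed.
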